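(* Let $\mathbb{F}\in\{\mathbb{R},\mathbb{C}\}$, let $A$ be an $n\times m$ matrix over $\mathbb{F}$, and let $p,q\in[1,\infty]$. Suppose $v\in\mathbb{F}^m$, $v\ne0$, is a maximizer of $\|Ax\|_q/\|x\|_p$ over nonzero $x\in\mathbb{F}^m$ such that (i) all nonzero components of $v$ have the same absolute value, and (ii) all nonzero components of $Av$ have the same absolute value. If $1<p<\infty$, or $p=1$ and $v\in K_1$, or $p=\infty$ and $v\in K_{-1}$, then $v$ is an eigenvector of $A^*A$.
   Context: $\|x\|_p$ is the Hölder $\ell_p$ norm. $A^*$ is the conjugate transpose. $K_1\subset\mathbb{F}^m$ is the set of vectors all of whose components have equal absolute values; $K_{-1}\subset\mathbb{F}^m$ is the set of vectors with at most one nonzero component. *)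

(* Defs.v *)
From HB Require Import structures.
From mathcomp Require Import all_boot all_order all_algebra.
From mathcomp Require Import all_classical all_reals ereal exp.
From mathcomp Require Import complex.
Set Implicit Arguments. Unset Strict Implicit. Unset Printing Implicit Defensive.
Import Order.TTheory GRing.Theory Num.Theory.
Local Open Scope ring_scope.

Definition lp_of (R : realType) (p : \bar R) (m : nat) (a : 'I_m -> R) : R :=
  match p with
  | EFin r => (\sum_(i < m) a i `^ r) `^ r^-1
  | _ => \big[Num.max/0]_(i < m) a i
  end.

(* The field F is either R (nrm = |.|, conj = id) or R[i] (nrm = complex
   modulus, conj = complex conjugation). Vectors of F^m are column vectors. *)
Definition lpnorm (R : realType) (F : nzRingType) (nrm : F -> R)
  (p : \bar R) (m : nat) (x : 'cV[F]_m) : R :=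
  lp_of p (fun i => nrm (x i ord0)).

Definition adjmx (F : nzRingType) (conj : F -> F) (n m : nat)
  (A : 'M[F]_(n, m)) : 'M[F]_(m, n) := (map_mx conj A)^T.

Definition is_maximizer (R : realType) (F : nzRingType) (nrm : F -> R)
  (p q : \bar R) (n m : nat) (A : 'M[F]_(n, m)) (v : 'cV[F]_m) : Prop :=
  v != 0 /\
  forall x : 'cV[F]_m, x != 0 ->
    lpnorm nrm q (A *m x) / lpnorm nrm p x <= lpnorm nrm q (A *m v) / lpnorm nrm p v.

Definition nonzero_equal_abs (R : realType) (F : nzRingType) (nrm : F -> R)
  (k : nat) (x : 'cV[F]_k) : Prop :=
  forall i j : 'I_k, x i ord0 != 0 -> x j ord0 != 0 ->
    nrm (x i ord0) = nrm (x j ord0).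

Definition inK1 (R : realType) (F : nzRingType) (nrm : F -> R)
  (k : nat) (x : 'cV[F]_k) : Prop :=
  forall i j : 'I_k, nrm (x i ord0) = nrm (x j ord0).

Definition inKm1 (F : nzRingType) (k : nat) (x : 'cV[F]_k) : Prop :=
  forall i j : 'I_k, x i ord0 != 0 -> x j ord0 != 0 -> i = j.

Definition eigenvector (F : nzRingType) (k : nat) (M : 'M[F]_k)
  (v : 'cV[F]_k) : Prop :=
  v != 0 /\ exists lambda : F, M *m v = lambda *: v.

Definition cmod (R : realType) (z : R[i]) : R := Normc.normc z.

(* Main.v *)
Require Import Defs.
From HB Require Import structures.
From mathcomp Require Import all_boot all_order all_algebra.
From mathcomp Require Import all_classical all_reals ereal exp.
From mathcomp Require Import complex.
From mathcomp Require Import ring lra.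
Import Order.TTheory GRing.Theory Num.Theory.
Local Open Scope ring_scope.


Section RealFacts.
Variable R : realType.
Implicit Types z r s t : R.

Lemma B1 z r : 0 <= z -> 1 <= r -> 1 + r * (z - 1) <= z `^ r.
Proof.
move=> z0 r1; have [->|rn1] := eqVneq r 1.
  by rewrite powRr1 // mul1r; lra.
have r1' : 1 < r by rewrite lt_neqAle eq_sym rn1.
have r0 : 0 < r by lra.
have r10 : 0 < r - 1 by lra.
have := @conjugate_powR R z 1 r (r / (r - 1)) z0 ler01 r0 (divr_gt0 r0 r10).
rewrite mulr1 powR1 /=.
have -> : 1 / (r / (r - 1)) = 1 - r^-1 by field; rewrite ?gt_eqF.
move=> /(_ _)/wrap[]; first by field; rewrite ?gt_eqF.
move=> H.
have : r * z <= r * (z `^ r / r + (1 - r^-1)) by rewrite ler_pM2l.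
have -> : r * (z `^ r / r + (1 - r^-1)) = z `^ r + (r - 1).
  by field; rewrite ?gt_eqF.
lra.
Qed.

Lemma B2 z r : 0 <= z -> 0 < r <= 1 -> z `^ r <= 1 + r * (z - 1).
Proof.
move=> z0 /andP[r0 r1]; have [->|rn1] := eqVneq r 1.
  by rewrite powRr1 // mul1r; lra.
have r1' : r < 1 by rewrite lt_neqAle rn1.
have r10 : 0 < 1 - r by lra.
have ir0 : 0 < r^-1 by rewrite invr_gt0.
have ir10 : 0 < (1 - r)^-1 by rewrite invr_gt0.
have := @conjugate_powR R (z `^ r) 1 (r^-1) ((1 - r)^-1) (powR_ge0 _ _) ler01
  ir0 ir10.
rewrite !invrK mulr1 powR1 /= -powRrM mulfV ?gt_eqF // powRr1 //.
move=> /(_ _)/wrap[]; first by lra.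
lra.
Qed.

Lemma B3 s r : 0 < s -> 1 <= r -> 0 < s - r * (s - 1) ->
  s `^ r <= s / (s - r * (s - 1)).
Proof.
move=> s0 r1 D0.
have is0 : 0 < s^-1 by rewrite invr_gt0.
have := @B1 (s^-1) r (ltW is0) r1.
set Y := s^-1 `^ r; set X := s `^ r => H.
have hYX : Y * X = 1.
  by rewrite /X /Y -powRM ?mulVf ?gt_eqF ?powR1 // ltW // invr_gt0.
have X0 : 0 <= X by apply: powR_ge0.
rewrite ler_pdivlMr //.
have H2 : s - r * (s - 1) <= s * Y.
  have -> : s - r * (s - 1) = s * (1 + r * (s^-1 - 1)).
    by field; rewrite gt_eqF.
  by rewrite ler_pM2l.
nra.
Qed.

Lemma lim_le D C t0 : 0 < t0 -> 0 <= C ->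
  (forall t, 0 < t -> t <= t0 -> D <= t * C) -> D <= 0.
Proof.
move=> t00 C0 H; rewrite leNgt; apply/negP => D0.
set t := Num.min t0 (D / (2 * (C + 1))).
have h1 : 0 < D / (2 * (C + 1)) by rewrite divr_gt0 //; lra.
have t0' : 0 < t by rewrite lt_min t00 h1.
have tt0 : t <= t0 by rewrite ge_min lexx.
have tD : t <= D / (2 * (C + 1)) by rewrite ge_min lexx orbT.
have := H t t0' tt0.
move: tD; rewrite ler_pdivlMr; last by lra.
nra.
Qed.

End RealFacts.


Section Keys.
Variable R : realType.

Lemma key0 (r S0 L b rho : R) : 1 < r -> 0 < S0 -> 0 <= L -> 0 <= b ->
  (forall t, 0 < t -> L * S0 `^ r^-1 + t * rho <= L * (S0 + (t * b) `^ r) `^ r^-1) ->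
  rho <= 0.
Proof.
move=> r1 S00 L0 b0 H.
have r0 : 0 < r by lra.
have ir0 : 0 < r^-1 by rewrite invr_gt0.
have ir1 : r^-1 <= 1 by rewrite invf_le1 //; lra.
set P := S0 `^ r^-1.
have P0 : 0 < P by rewrite powR_gt0.
set C := L * P * r^-1 * b `^ r / S0.
have C0 : 0 <= C.
  by rewrite /C divr_ge0 ?(ltW S00) // !mulr_ge0 ?powR_ge0 // ltW.
have Hb : forall t, 0 < t -> rho <= C * t `^ (r - 1).
  move=> t t0; have := H t t0.
  have -> : S0 + (t * b) `^ r = S0 * (1 + (t * b) `^ r / S0).
    by field; rewrite gt_eqF.
  rewrite powRM ?(ltW S00) //; last first.
    by rewrite addr_ge0 // divr_ge0 ?powR_ge0 // ltW.
  have hz : 0 <= 1 + (t * b) `^ r / S0.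
    by rewrite addr_ge0 // divr_ge0 ?powR_ge0 // ltW.
  have hr : 0 < r^-1 <= 1 by rewrite ir0 ir1.
  have hB := @B2 R _ _ hz hr.
  have htb : (t * b) `^ r = t * (t `^ (r - 1) * b `^ r).
    by rewrite powRM ?(ltW t0) // mulrA mulr_powRB1 // ltW.
  rewrite -/P htb => h1.
  have h2 : L * P * (1 + t * (t `^ (r - 1) * b `^ r) / S0) `^ r^-1 <=
            L * P * (1 + r^-1 * (1 + t * (t `^ (r - 1) * b `^ r) / S0 - 1)).
    by apply: ler_wpM2l; [rewrite mulr_ge0 // ltW | rewrite -htb].
  have h3 : t * rho <= t * (C * t `^ (r - 1)).
    have -> : t * (C * t `^ (r - 1)) = L * P * (1 + r^-1 * (1 + t * (t `^ (r - 1) * b `^ r) / S0 - 1)) - L * P.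
      by rewrite /C; field; rewrite !gt_eqF.
    rewrite mulrA in h1; lra.
  by rewrite ler_pM2l in h3.
rewrite leNgt; apply/negP => rho0.
set e := rho / (C + 1).
have e0 : 0 < e by rewrite divr_gt0 //; lra.
set t := e `^ (r - 1)^-1.
have t0 : 0 < t by rewrite powR_gt0.
have := Hb t t0.
rewrite /t -powRrM mulVf ?powRr1; [|exact: ltW|lra].
rewrite /e.
have : C * (rho / (C + 1)) < rho.
  rewrite mulrA ltr_pdivrMr; last by lra.
  nra.
lra.
Qed.


Lemma key (r a S0 L sg rho c2 : R) (N : R -> R) :
  1 <= r -> 0 < a -> a `^ r <= S0 -> 0 <= L -> 0 <= c2 ->
  (forall t, 0 < t -> 0 <= N t /\ N t ^+ 2 = a ^+ 2 + 2 * t * sg + t ^+ 2 * c2) ->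
  (forall t, 0 < t ->
     L * S0 `^ r^-1 + t * rho <= L * (S0 - a `^ r + N t `^ r) `^ r^-1) ->
  rho <= L * S0 `^ r^-1 * (a `^ r / S0) / a ^+ 2 * sg.
Proof.
move=> r1 a0 aS L0 c20 HN H.
have r0 : 0 < r by lra.
have ir0 : 0 < r^-1 by rewrite invr_gt0.
have ir1 : r^-1 <= 1 by rewrite invf_le1 //; lra.
have ar0 : 0 < a `^ r by rewrite powR_gt0.
have S00 : 0 < S0 by lra.
set P := S0 `^ r^-1.
have P0 : 0 < P by rewrite powR_gt0.
set g := a `^ r / S0.
have g0 : 0 < g by rewrite divr_gt0.
set A2 := a ^+ 2.
have A20 : 0 < A2 by rewrite exprn_gt0.
set mu := L * P * g / A2.
have P0' := ltW P0. have g0' := ltW g0. have A20' := ltW A20.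
have mu0 : 0 <= mu by rewrite /mu; apply: divr_ge0 => //; apply: mulr_ge0 => //; apply: mulr_ge0.
set K1 := (`|sg| + c2) / A2.
have K10 : 0 <= K1 by apply: divr_ge0 => //; apply: addr_ge0.
set C0 := `|rho| * (r - 1) * K1 + mu * c2 / 2.
have C00 : 0 <= C0.
  have h1 : 0 <= `|rho| * (r - 1) * K1.
    by apply: mulr_ge0 => //; apply: mulr_ge0 => //; lra.
  have h2 : 0 <= mu * c2 / 2.
    by apply: divr_ge0 => //; apply: mulr_ge0.
  rewrite /C0; lra.
set t0 := Num.min 1 (1 / (2 * r * (K1 + 1))).
have t00 : 0 < t0.
  rewrite lt_min ltr01 /=; apply: divr_gt0 => //.
  apply: mulr_gt0; [apply: mulr_gt0 => //|]; lra.
suff h : rho - mu * sg <= 0 by move: h; rewrite /mu /A2 /g /P; lra.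
apply: (@lim_le R _ C0 t0 t00 C00) => t t0' tt0.
have [t1 tt1] : t <= 1 /\ t <= 1 / (2 * r * (K1 + 1)).
  by move: tt0; rewrite /t0 le_min => /andP.
have tK : t * (2 * r * (K1 + 1)) <= 1.
  rewrite -ler_pdivlMr; last by rewrite !mulr_gt0 //; lra.
  by [].
have tK2 : 2 * r * (t * K1) < 1 by nra.
set kap := (sg + t * c2 / 2) / A2.
set k := t * kap.
have hkA : k * A2 = t * sg + t ^+ 2 * c2 / 2.
  by rewrite /k /kap; field; rewrite gt_eqF.
have hK1 : K1 * A2 = `|sg| + c2 by rewrite /K1; field; rewrite gt_eqF.
have hs1 := ler_norm sg.
have hs2 : - `|sg| <= sg by rewrite lerNl -normrN ler_norm.
have etK : t * K1 * A2 = t * (`|sg| + c2) by rewrite -mulrA hK1.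
have t2 : t ^+ 2 <= t by rewrite expr2; nra.
have hk1 : k <= t * K1.
  rewrite -(ler_pM2r A20) hkA etK; nra.
have hk2 : - (t * K1) <= k.
  rewrite -(ler_pM2r A20) mulNr hkA etK; nra.
have hrk1 : (r - 1) * k <= (r - 1) * (t * K1) by rewrite ler_wpM2l //; lra.
have hrk2 : (r - 1) * (- (t * K1)) <= (r - 1) * k by rewrite ler_wpM2l //; lra.
have hrtK : 0 <= r * (t * K1).
  by apply: mulr_ge0; [lra|apply: mulr_ge0 => //; lra].
set d := 1 - (r - 1) * k.
have d0 : 0 < d by rewrite /d; nra.
have k1 : 0 < 1 + k by nra.
have [Nt0 Nt2] := HN t t0'.
have hN : N t <= a * (1 + k).
  have h2 : N t ^+ 2 <= (a * (1 + k)) ^+ 2.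
    have -> : (a * (1 + k)) ^+ 2 = A2 + 2 * (k * A2) + A2 * k ^+ 2.
      by rewrite /A2; ring.
    rewrite Nt2 hkA.
    have -> : 2 * (t * sg + t ^+ 2 * c2 / 2) = 2 * t * sg + t ^+ 2 * c2 by field.
    have : 0 <= A2 * k ^+ 2 by rewrite mulr_ge0 ?sqr_ge0.
    rewrite -/A2; lra.
  have h3 : 0 <= a * (1 + k) by rewrite mulr_ge0 // ltW.
  nra.
have hNr : N t `^ r <= a `^ r * ((1 + k) / d).
  apply: (le_trans (@ge0_ler_powR R r (ltW r0) (N t) (a * (1 + k)) _ _ hN)).
  - by rewrite nnegrE.
  - by rewrite nnegrE mulr_ge0 // ltW.
  rewrite powRM ?(ltW a0) ?(ltW k1) // ler_wpM2l ?(ltW ar0) //.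
  have hd : d = (1 + k) - r * ((1 + k) - 1) by rewrite /d; ring.
  rewrite hd; apply: B3 => //; rewrite -hd //.
set y := g * r * k / d.
have hS : S0 - a `^ r + N t `^ r <= S0 * (1 + y).
  have -> : S0 * (1 + y) = S0 - a `^ r + a `^ r * ((1 + k) / d).
    have d0' : 0 < 1 - (r - 1) * k := d0.
    by rewrite /y /g /d; field; rewrite ?(gt_eqF d0') ?(gt_eqF S00).
  lra.
have hpos : 0 <= S0 - a `^ r + N t `^ r.
  have : 0 <= N t `^ r by apply: powR_ge0.
  lra.
have y0 : 0 <= 1 + y.
  have := le_trans hpos hS; rewrite pmulr_rge0 //.
have hP : (S0 - a `^ r + N t `^ r) `^ r^-1 <= P * (1 + r^-1 * y).
  apply: (le_trans (@ge0_ler_powR R r^-1 (ltW ir0) _ _ _ _ hS)).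
  - by rewrite nnegrE.
  - by rewrite nnegrE mulr_ge0 // ltW.
  rewrite powRM ?(ltW S00) // ler_wpM2l ?(ltW P0) //.
  have := @B2 R (1 + y) r^-1 y0; rewrite ir0 ir1 => /(_ isT).
  by have -> : 1 + y - 1 = y by ring.
have hL := H t t0'; rewrite -/P in hL.
have hL2 : L * (S0 - a `^ r + N t `^ r) `^ r^-1 <= L * (P * (1 + r^-1 * y)).
  by rewrite ler_wpM2l.
have hry : r^-1 * y = g * k / d by rewrite /y; field; rewrite ?(gt_eqF d0) ?(gt_eqF r0).
have h4 : t * rho <= L * P * (g * k / d).
  rewrite -hry; nra.
have h5 : t * rho * d <= L * P * g * k.
  have -> : L * P * g * k = L * P * (g * k / d) * d by field; rewrite gt_eqF.
  by rewrite ler_pM2r //.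
have h6 : rho * d <= mu * (sg + t * c2 / 2).
  have e1 : L * P * g * k = t * (mu * (sg + t * c2 / 2)).
    by rewrite /mu /k /kap; field; rewrite gt_eqF.
  rewrite e1 in h5.
  have h7 : t * (rho * d) <= t * (mu * (sg + t * c2 / 2)) by rewrite mulrA.
  by rewrite ler_pM2l in h7.
have hrk : rho * k <= `|rho| * (t * K1).
  have [hr|hr] := lerP 0 rho.
    by rewrite ger0_norm //; nra.
  by rewrite ltr0_norm //; nra.
have -> : t * C0 = `|rho| * (r - 1) * (t * K1) + mu * t * c2 / 2.
  by rewrite /C0; ring.
have e2 : rho - mu * sg = rho * ((r - 1) * k) + (rho * d - mu * sg).
  by rewrite /d; ring.
rewrite e2.
have : rho * ((r - 1) * k) <= `|rho| * (r - 1) * (t * K1).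
  have -> : rho * ((r - 1) * k) = (r - 1) * (rho * k) by ring.
  have -> : `|rho| * (r - 1) * (t * K1) = (r - 1) * (`|rho| * (t * K1)) by ring.
  by rewrite ler_wpM2l //; lra.
have : rho * d - mu * sg <= mu * t * c2 / 2.
  have -> : mu * t * c2 / 2 = mu * (sg + t * c2 / 2) - mu * sg by field.
  lra.
lra.
Qed.

End Keys.


Section Generic.
Variables (R : realType) (F : fieldType) (nrm : F -> R).
Variables (conj : {rmorphism F -> F}) (re : F -> R) (emb : {rmorphism R -> F}).
Hypothesis conjK : involutive conj.
Hypothesis conj_emb : forall t, conj (emb t) = emb t.
Hypothesis reD : forall x y, re (x + y) = re x + re y.
Hypothesis re_emb : forall t z, re (emb t * z) = t * re z.
Hypothesis nrm_ge0 : forall z, 0 <= nrm z.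
Hypothesis nrm_eq0 : forall z, nrm z = 0 -> z = 0.
Hypothesis nrm2 : forall z, nrm z ^+ 2 = re (conj z * z).
Hypothesis re_cs : forall a b, re (conj a * b) <= nrm a * nrm b.
Hypothesis re_sym : forall a b, re (conj a * b) = re (conj b * a).
Hypothesis nrm_emb : forall t z, nrm (emb t * z) = `|t| * nrm z.

Lemma re0 : re 0 = 0.
Proof. have h := reD 0 0; rewrite addr0 in h; lra. Qed.

Lemma reB x y : re (x - y) = re x - re y.
Proof. have h := reD (x - y) y; rewrite subrK in h; lra. Qed.

Lemma nrm0 : nrm 0 = 0.
Proof. by have := nrm_emb 0 0; rewrite mulr0 normr0 mul0r. Qed.

Lemma re_sum (I : Type) (s : seq I) (P : pred I) (f : I -> F) :
  re (\sum_(i <- s | P i) f i) = \sum_(i <- s | P i) re (f i).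
Proof. exact: (big_morph re reD re0). Qed.

Definition reip {m} (x y : 'cV[F]_m) : R := \sum_i re (conj (y i ord0) * x i ord0).

Lemma ip_adj n m (A : 'M[F]_(n, m)) x v :
  reip (A *m x) (A *m v) = reip x ((adjmx conj A *m A) *m v).
Proof.
rewrite /reip -!re_sum; congr re.
under [RHS]eq_bigr => i _.
  rewrite -mulmxA mxE rmorph_sum mulr_suml.
  under eq_bigr => r _ do rewrite /adjmx !mxE rmorphM conjK.
  over.
rewrite exchange_big /=; apply: eq_bigr => r _.
rewrite !mxE mulr_sumr; apply: eq_bigr => i _.
by rewrite mulrCA mulrA.
Qed.

Lemma sum_upd m (j : 'I_m) (a : R) (b : 'I_m -> R) :
  \sum_i (if i == j then a else b i) = \sum_i b i + (a - b j).
Proof.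
rewrite (bigD1 j) //= eqxx [in RHS](bigD1 j) //=.
under eq_bigr => i /negbTE -> do [].
set S := \sum_(i < m | i != j) b i; lra.
Qed.

Definition xt {m} (v : 'cV[F]_m) j u (t : R) : 'cV[F]_m :=
  \col_i (if i == j then v j ord0 + emb t * u else v i ord0).

Lemma reip_xt m (v w : 'cV[F]_m) j u t :
  reip (xt v j u t) w = reip v w + t * re (conj (w j ord0) * u).
Proof.
rewrite /reip (eq_bigr (fun i => if i == j then re (conj (w j ord0) * (v j ord0 + emb t * u))
   else re (conj (w i ord0) * v i ord0))); last first.
  by move=> i _; rewrite mxE; case: eqP => [->|].
rewrite (@sum_upd _ j (re (conj (w j ord0) * (v j ord0 + emb t * u)))
   (fun i => re (conj (w i ord0) * v i ord0))).
rewrite mulrDr reD mulrCA re_emb; lra.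
Qed.

Lemma sum_xt m (v : 'cV[F]_m) j u t (f : R -> R) :
  \sum_i f (nrm (xt v j u t i ord0)) =
  \sum_i f (nrm (v i ord0)) + (f (nrm (v j ord0 + emb t * u)) - f (nrm (v j ord0))).
Proof.
under eq_bigr => i _ do rewrite mxE (fun_if (fun z => f (nrm z))).
by rewrite (@sum_upd _ j _ (fun i => f (nrm (v i ord0)))).
Qed.


Lemma lp_ge0 (p : \bar R) m (a : 'I_m -> R) : (forall i, 0 <= a i) -> 0 <= lp_of p a.
Proof. by move=> a0; case: p => [r||] /=; rewrite ?powR_ge0 ?bigmax_ge_id. Qed.

Lemma lp_gt0 (p : \bar R) m (a : 'I_m -> R) k : (1 <= p)%E ->
  (forall i, 0 <= a i) -> 0 < a k -> 0 < lp_of p a.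
Proof.
move=> p1 a0 ak; case: p p1 => [r||] //= p1.
- rewrite lee_fin in p1; apply: powR_gt0.
  rewrite (bigD1 k) //=; apply: lt_le_trans (_ : a k `^ r <= _).
    by rewrite powR_gt0.
  by rewrite lerDl sumr_ge0 // => i _; rewrite powR_ge0.
- by apply: lt_le_trans ak _; apply: le_bigmax.
Qed.

Lemma exists_nz m (v : 'cV[F]_m) : v != 0 -> exists k, v k ord0 != 0.
Proof.
move=> vn0; case: (pickP (fun k => v k ord0 != 0)) => [k hk|h]; first by exists k.
case/eqP: vn0; apply/matrixP => i j; rewrite (ord1 j) !mxE.
by have := h i => /negbFE/eqP.
Qed.

Lemma nrm_gt0 z : z != 0 -> 0 < nrm z.
Proof.
move=> zn0; rewrite lt_neqAle nrm_ge0 andbT; apply/eqP => h.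
by move/eqP: zn0; apply; apply: nrm_eq0.
Qed.

Lemma re_conj_nrm z : re (conj z * z) = nrm z ^+ 2.
Proof. by rewrite nrm2. Qed.


Lemma nrm_pert x u t :
  nrm (x + emb t * u) ^+ 2 = nrm x ^+ 2 + 2 * t * re (conj x * u) + t ^+ 2 * nrm u ^+ 2.
Proof.
rewrite !nrm2 rmorphD rmorphM conj_emb.
have -> : (conj x + emb t * conj u) * (x + emb t * u) = conj x * x + emb t * (conj x * u)
   + emb t * (conj u * x) + emb t * (emb t * (conj u * u)) by ring.
rewrite !reD !re_emb (re_sym u x); ring.
Qed.

Lemma sqr_le0 z : nrm z ^+ 2 <= 0 -> z = 0.
Proof.
move=> h; apply: nrm_eq0; apply/eqP; rewrite -sqrf_eq0 eq_le h sqr_ge0 //.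
Qed.

Lemma Lfin m (v w : 'cV[F]_m) (r L : R) :
  1 <= r -> 0 <= L -> v != 0 -> nonzero_equal_abs nrm v ->
  (1 < r \/ forall j, v j ord0 != 0) ->
  (forall x, reip x w <= L * lpnorm nrm r%:E x) ->
  reip v w = L * lpnorm nrm r%:E v ->
  exists mu : R, w = emb mu *: v.
Proof.
move=> r1 L0 vn0 Hne Hr H Heq.
have [k hk] := @exists_nz _ _ vn0.
set a := nrm (v k ord0).
have a0 : 0 < a := @nrm_gt0 _ hk.
set S0 := \sum_i nrm (v i ord0) `^ r.
have aS : a `^ r <= S0.
  rewrite /S0 (bigD1 k) //= lerDl sumr_ge0 // => i _; exact: powR_ge0.
have S00 : 0 < S0 by apply: lt_le_trans aS; rewrite powR_gt0.
have hlp : forall x : 'cV[F]_m,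
  lpnorm nrm r%:E x = (\sum_i nrm (x i ord0) `^ r) `^ r^-1 by [].
set mu := L * S0 `^ r^-1 * (a `^ r / S0) / a ^+ 2.
exists mu; apply/matrixP => i j; rewrite (ord1 j) {j} mxE.
have Hx : forall u t, L * S0 `^ r^-1 + t * re (conj (w i ord0) * u) <=
    L * (S0 - nrm (v i ord0) `^ r + nrm (v i ord0 + emb t * u) `^ r) `^ r^-1.
  move=> u t; have := H (xt v i u t).
  rewrite reip_xt Heq !hlp (@sum_xt _ v i u t (fun x => x `^ r)) -/S0.
  have -> // : S0 + (nrm (v i ord0 + emb t * u) `^ r - nrm (v i ord0) `^ r) =
     S0 - nrm (v i ord0) `^ r + nrm (v i ord0 + emb t * u) `^ r by ring.
have [vi0|vin0] := eqVneq (v i ord0) 0.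
- have r1' : 1 < r.
    by case: Hr => // h; move: (h i); rewrite vi0 eqxx.
  rewrite vi0 mulr0; apply: sqr_le0.
  apply: (@key0 R r S0 L (nrm (w i ord0))) => // t t0.
  have := Hx (w i ord0) t.
  rewrite vi0 add0r nrm0 powR0 ?subr0; last by rewrite gt_eqF //; lra.
  by rewrite nrm_emb gtr0_norm // re_conj_nrm.
- have ha : nrm (v i ord0) = a by apply: Hne.
  set u := w i ord0 - emb mu * v i ord0.
  suff : u = 0 by move/eqP; rewrite subr_eq0 => /eqP.
  apply: sqr_le0.
  have HN : forall t, 0 < t -> 0 <= nrm (v i ord0 + emb t * u) /\
     nrm (v i ord0 + emb t * u) ^+ 2 =
     a ^+ 2 + 2 * t * re (conj (v i ord0) * u) + t ^+ 2 * nrm u ^+ 2.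
    by move=> t t0; split => //; rewrite nrm_pert ha.
  have HH : forall t, 0 < t -> L * S0 `^ r^-1 + t * re (conj (w i ord0) * u) <=
     L * (S0 - a `^ r + nrm (v i ord0 + emb t * u) `^ r) `^ r^-1.
    by move=> t t0; have := Hx u t; rewrite ha.
  have := @key R r a S0 L _ _ _ (fun t => nrm (v i ord0 + emb t * u)) r1 a0 aS L0 (sqr_ge0 _) HN HH.
  rewrite -/mu => h.
  have e : nrm u ^+ 2 = re (conj (w i ord0) * u) - mu * re (conj (v i ord0) * u).
    by rewrite nrm2 {1}/u rmorphB rmorphM conj_emb mulrBl reB -mulrA re_emb.
  lra.
Qed.


Lemma Linf m (v w : 'cV[F]_m) (L : R) :
  0 <= L -> v != 0 -> inKm1 v ->
  (forall x, reip x w <= L * lpnorm nrm +oo%E x) ->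
  reip v w = L * lpnorm nrm +oo%E v ->
  exists lam : F, w = lam *: v.
Proof.
move=> L0 vn0 HK H Heq.
have [k hk] := @exists_nz _ _ vn0.
set a := nrm (v k ord0).
have a0 : 0 < a := @nrm_gt0 _ hk.
have hv : forall i, i != k -> v i ord0 = 0.
  move=> i ik; apply/eqP; apply: contraNT ik => hi; apply/eqP; exact: HK.
have hlp : forall x : 'cV[F]_m,
  lpnorm nrm +oo%E x = \big[Num.max/0]_i nrm (x i ord0) by [].
have hvi : forall i, nrm (v i ord0) <= a.
  move=> i; case: (eqVneq i k) => [->|ik] //; by rewrite hv // nrm0 ltW.
have hva : lpnorm nrm +oo%E v = a.
  rewrite hlp; apply/eqP; rewrite eq_le; apply/andP; split.
  - by apply: bigmax_le => [|i _]; [exact: ltW | exact: hvi].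
  - exact: (le_bigmax 0 (fun i => nrm (v i ord0)) k).
have hw : forall i, i != k -> w i ord0 = 0.
  move=> i ik; apply/eqP/negPn/negP => wn0.
  set b := nrm (w i ord0).
  have b0 : 0 < b := @nrm_gt0 _ wn0.
  set t := a / b.
  have t0 : 0 < t by rewrite divr_gt0.
  have := H (xt v i (w i ord0) t).
  rewrite reip_xt Heq hva re_conj_nrm -/b.
  have hx : lpnorm nrm +oo%E (xt v i (w i ord0) t) <= a.
    rewrite hlp; apply: bigmax_le => [|i0 _]; first exact: ltW.
    rewrite mxE; case: eqP => [_|_] //.
    rewrite (hv i ik) add0r nrm_emb gtr0_norm // -/b /t divfK //.
    by rewrite gt_eqF.
  have : L * lpnorm nrm +oo%E (xt v i (w i ord0) t) <= L * a by rewrite ler_wpM2l.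
  have : 0 < t * b ^+ 2 by rewrite mulr_gt0 // exprn_gt0.
  lra.
exists (w k ord0 / v k ord0); apply/matrixP => i j; rewrite (ord1 j) {j} mxE.
case: (eqVneq i k) => [->|ik]; first by rewrite mulfVK.
by rewrite (hw i ik) (hv i ik) mulr0.
Qed.


Lemma Lq m (y0 : 'cV[F]_m) (q : \bar R) k : (1 <= q)%E ->
  nonzero_equal_abs nrm y0 -> y0 k ord0 != 0 ->
  forall y, reip y y0 * lpnorm nrm q y0 <= lpnorm nrm q y * reip y0 y0.
Proof.
move=> q1 Hne hk y.
set c := nrm (y0 k ord0).
have c0 : 0 < c := @nrm_gt0 _ hk.
pose T i := y0 i ord0 != 0.
have hc : forall i, nrm (y0 i ord0) = if T i then c else 0.
  move=> i; rewrite /T; case: (eqVneq (y0 i ord0) 0) => [->|h] /=; first by rewrite nrm0.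
  exact: Hne.
set Nn := \sum_i (if T i then 1 else 0 : R).
have Nn1 : 1 <= Nn.
  rewrite /Nn (bigD1 k) //= /T hk lerDl sumr_ge0 // => i _; by case: ifP.
set S1 := \sum_i (if T i then nrm (y i ord0) else 0).
have S10 : 0 <= S1 by rewrite sumr_ge0 // => i _; case: ifP.
have hre : reip y y0 <= c * S1.
  rewrite /reip /S1 mulr_sumr; apply: ler_sum => i _.
  apply: le_trans (re_cs _ _) _; rewrite hc; case: (T i) => //=.
  by rewrite !mul0r mulr0.
have hE : reip y0 y0 = Nn * c ^+ 2.
  rewrite /reip /Nn mulr_suml; apply: eq_bigr => i _; rewrite re_conj_nrm hc.
  by case: (T i); rewrite ?mul1r ?mul0r ?expr2 ?mul0r.
rewrite hE.
case: q q1 => [s||] q1.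
- rewrite lee_fin in q1.
  have s0 : 0 < s by lra.
  have is0 : 0 < s^-1 by rewrite invr_gt0.
  have Nn0 : 0 < Nn by lra.
  have hly0 : lpnorm nrm s%:E y0 = Nn `^ s^-1 * c.
    rewrite /lpnorm /=.
    have -> : \sum_i nrm (y0 i ord0) `^ s = Nn * c `^ s.
      rewrite /Nn mulr_suml; apply: eq_bigr => i _; rewrite hc.
      case: (T i); rewrite ?mul1r ?mul0r // powR0 // gt_eqF //.
    rewrite powRM ?powR_ge0 ?(ltW Nn0) // -powRrM mulfV ?gt_eqF // powRr1 //.
    exact: ltW.
  have hlpy : lpnorm nrm s%:E y = (\sum_i nrm (y i ord0) `^ s) `^ s^-1 by [].
  have hpm : S1 * Nn `^ s^-1 <= Nn * lpnorm nrm s%:E y.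
    have [S1z|S1p] := eqVneq S1 0.
      rewrite S1z mul0r; apply: mulr_ge0; first exact: ltW.
      by apply: lp_ge0.
    have S1p' : 0 < S1 by rewrite lt_neqAle eq_sym S1p S10.
    set m0 := S1 / Nn.
    have m00 : 0 < m0 by rewrite divr_gt0.
    set M := m0 `^ s.
    have M0 : 0 <= M by apply: powR_ge0.
    have hsum : M * Nn <= \sum_i nrm (y i ord0) `^ s.
      apply: le_trans (_ : \sum_i (if T i then nrm (y i ord0) `^ s else 0) <= _); last first.
        by apply: ler_sum => i _; case: (T i) => //; exact: powR_ge0.
      have -> : M * Nn = \sum_i (if T i then M * (1 + s * (nrm (y i ord0) / m0 - 1)) else 0).
        rewrite (eq_bigr (fun i => (if T i then 1 else 0) * (M * (1 - s)) +
              (if T i then nrm (y i ord0) else 0) * (M * s / m0))); last first.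
          move=> i _; case: (T i); last by rewrite !mul0r addr0.
          by field; rewrite gt_eqF.
        rewrite big_split /= -!mulr_suml -/Nn -/S1 /m0.
        by field; rewrite ?gt_eqF.
      apply: ler_sum => i _; case: (T i) => //.
      set z := nrm (y i ord0).
      have z0 : 0 <= z by apply: nrm_ge0.
      have hz : z `^ s = M * (z / m0) `^ s.
        have e : z = m0 * (z / m0) by field; rewrite gt_eqF.
        rewrite {1}e powRM //; first exact: ltW.
        by rewrite divr_ge0 // ltW.
      rewrite hz ler_wpM2l //; apply: B1 => //.
      by rewrite divr_ge0 // ltW.
    have h1 : (M * Nn) `^ s^-1 <= lpnorm nrm s%:E y.
      rewrite hlpy; apply: ge0_ler_powR => //; first exact: ltW.
      - by rewrite nnegrE mulr_ge0 // ltW.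
      - by rewrite nnegrE sumr_ge0 // => i _; exact: powR_ge0.
    have h2 : (M * Nn) `^ s^-1 = m0 * Nn `^ s^-1.
      rewrite powRM // ?(ltW Nn0) // /M -powRrM mulfV ?gt_eqF // powRr1 //.
      exact: ltW.
    rewrite h2 in h1.
    have -> : S1 * Nn `^ s^-1 = Nn * (m0 * Nn `^ s^-1).
      by rewrite /m0; field; rewrite gt_eqF.
    by rewrite ler_wpM2l // ltW.
  rewrite hly0.
  have X0 : 0 <= Nn `^ s^-1 * c by rewrite mulr_ge0 ?powR_ge0 // ltW.
  have h1 := ler_wpM2r X0 hre.
  have h2 : c * c * (S1 * Nn `^ s^-1) <= c * c * (Nn * lpnorm nrm s%:E y).
    by rewrite ler_wpM2l // mulr_ge0 // ltW.
  rewrite expr2; lra.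
- rewrite /lpnorm /=.
  have hly0 : \big[Num.max/0]_i nrm (y0 i ord0) = c.
    apply/eqP; rewrite eq_le; apply/andP; split.
    + apply: bigmax_le => [|i _]; first exact: ltW.
      by rewrite hc; case: (T i) => //; exact: ltW.
    + exact: (le_bigmax 0 (fun i => nrm (y0 i ord0)) k).
  rewrite hly0.
  set Mx := \big[Num.max/0]_i nrm (y i ord0).
  have hS : S1 <= Nn * Mx.
    rewrite /S1 /Nn mulr_suml; apply: ler_sum => i _; case: (T i).
    + by rewrite mul1r; exact: (le_bigmax 0 (fun i => nrm (y i ord0)) i).
    + by rewrite mul0r.
  have h1 := ler_wpM2r (ltW c0) hre.
  have h2 : c * c * S1 <= c * c * (Nn * Mx) by rewrite ler_wpM2l // mulr_ge0 // ltW.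
  rewrite expr2; lra.
- rewrite /lpnorm /=.
  have hly0 : \big[Num.max/0]_i nrm (y0 i ord0) = c.
    apply/eqP; rewrite eq_le; apply/andP; split.
    + apply: bigmax_le => [|i _]; first exact: ltW.
      by rewrite hc; case: (T i) => //; exact: ltW.
    + exact: (le_bigmax 0 (fun i => nrm (y0 i ord0)) k).
  rewrite hly0.
  set Mx := \big[Num.max/0]_i nrm (y i ord0).
  have hS : S1 <= Nn * Mx.
    rewrite /S1 /Nn mulr_suml; apply: ler_sum => i _; case: (T i).
    + by rewrite mul1r; exact: (le_bigmax 0 (fun i => nrm (y i ord0)) i).
    + by rewrite mul0r.
  have h1 := ler_wpM2r (ltW c0) hre.
  have h2 : c * c * S1 <= c * c * (Nn * Mx) by rewrite ler_wpM2l // mulr_ge0 // ltW.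
  rewrite expr2; lra.
Qed.


Theorem main_gen n m (A : 'M[F]_(n, m)) (p q : \bar R) (v : 'cV[F]_m) :
  (1 <= p)%E -> (1 <= q)%E -> is_maximizer nrm p q A v ->
  nonzero_equal_abs nrm v -> nonzero_equal_abs nrm (A *m v) ->
  ((1 < p < +oo)%E \/ (p = 1%E /\ inK1 nrm v) \/ (p = +oo%E /\ inKm1 v)) ->
  eigenvector (adjmx conj A *m A) v.
Proof.
move=> p1 q1 [vn0 Hmax] Hv HAv Hcase.
split => //.
have [kv hkv] := @exists_nz _ _ vn0.
have hP : 0 < lpnorm nrm p v.
  exact: (@lp_gt0 _ _ _ _ p1 (fun i => nrm_ge0 _) (@nrm_gt0 _ hkv)).
case: (pickP (fun k => (A *m v) k ord0 != 0)) => [k hk | h0]; last first.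
  have Av0 : A *m v = 0.
    apply/matrixP => i j; rewrite (ord1 j) [RHS]mxE.
    by have := h0 i => /negbFE/eqP.
  by exists 0; rewrite -mulmxA Av0 mulmx0 scale0r.
have hQ : 0 < lpnorm nrm q (A *m v).
  exact: (@lp_gt0 _ _ _ _ q1 (fun i => nrm_ge0 _) (@nrm_gt0 _ hk)).
set E := reip (A *m v) (A *m v).
have E0 : 0 <= E.
  by rewrite /E /reip sumr_ge0 // => i _; rewrite re_conj_nrm sqr_ge0.
set L := E / lpnorm nrm p v.
have L0 : 0 <= L by rewrite divr_ge0 // ltW.
have Hstar : forall x, reip x ((adjmx conj A *m A) *m v) <= L * lpnorm nrm p x.
  move=> x; have [->|xn0] := eqVneq x 0.
    have -> : reip 0 ((adjmx conj A *m A) *m v) = 0.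
      have z : forall i, (0 : 'cV[F]_m) i ord0 = 0 by move=> i; rewrite mxE.
      by rewrite /reip big1 // => i _; rewrite z mulr0 re0.
    by rewrite mulr_ge0 // lp_ge0.
  have [kx hkx] := @exists_nz _ _ xn0.
  have hPx : 0 < lpnorm nrm p x.
    exact: (@lp_gt0 _ _ _ _ p1 (fun i => nrm_ge0 _) (@nrm_gt0 _ hkx)).
  have hm := Hmax x xn0.
  have hAx : lpnorm nrm q (A *m x) <= lpnorm nrm q (A *m v) * lpnorm nrm p x / lpnorm nrm p v.
    by rewrite mulrAC -ler_pdivrMr.
  have hL := @Lq _ (A *m v) q k q1 HAv hk (A *m x).
  rewrite ip_adj -/E in hL.
  have h2 : reip x ((adjmx conj A *m A) *m v) * lpnorm nrm q (A *m v) <=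
            L * lpnorm nrm p x * lpnorm nrm q (A *m v).
    apply: le_trans hL _.
    have -> : L * lpnorm nrm p x * lpnorm nrm q (A *m v) =
      lpnorm nrm q (A *m v) * lpnorm nrm p x / lpnorm nrm p v * E.
      by rewrite /L; field; rewrite gt_eqF.
    by rewrite ler_wpM2r.
  by rewrite ler_pM2r in h2.
have Heq : reip v ((adjmx conj A *m A) *m v) = L * lpnorm nrm p v.
  by rewrite -ip_adj -/E /L; field; rewrite gt_eqF.
case: Hcase => [/andP[hp1 hp2] | [[hp hK] | [hp hK]]].
- have hex : forall pp : \bar R, (1 < pp)%E -> (pp < +oo)%E -> exists r : R, pp = r%:E.
    by case => [r _ _|//|//]; exists r.
  have [r hr] := hex p hp1 hp2.
  subst p; rewrite lte_fin in hp1.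
  have [mu hmu] := @Lfin _ v _ r L (ltW hp1) L0 vn0 Hv (or_introl hp1) Hstar Heq.
  by exists (emb mu).
- subst p.
  have hnz : forall j, v j ord0 != 0.
    move=> j; apply/eqP => h; have := hK j kv; rewrite h nrm0 => h2.
    by have := @nrm_gt0 _ hkv; rewrite -h2 ltxx.
  have [mu hmu] := @Lfin _ v _ 1 L (lexx _) L0 vn0 Hv (or_intror hnz) Hstar Heq.
  by exists (emb mu).
- subst p.
  have [lam hlam] := @Linf _ v _ L L0 vn0 hK Hstar Heq.
  by exists lam.
Qed.

End Generic.


Section Inst.
Variable R : realType.

Lemma cplx_re_cs (a b : R[i]) : complex.Re (conjc a * b) <= cmod a * cmod b.
Proof.
case: a => a1 a2; case: b => b1 b2; rewrite /cmod /= -sqrtrM; last first.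
  by rewrite addr_ge0 // sqr_ge0.
set x := a1 * b1 - - a2 * b2.
apply: le_trans (ler_norm x) _.
rewrite -sqrtr_sqr ler_sqrt; last by rewrite mulr_ge0 // addr_ge0 // sqr_ge0.
have : 0 <= (a1 * b2 - a2 * b1) ^+ 2 by apply: sqr_ge0.
rewrite /x; nra.
Qed.

Lemma cplx_nrm2 (z : R[i]) : cmod z ^+ 2 = complex.Re (conjc z * z).
Proof.
case: z => a b; rewrite /cmod /= sqr_sqrtr; first by ring.
by rewrite addr_ge0 // sqr_ge0.
Qed.

Lemma cplx_nrm_emb (t : R) (z : R[i]) : cmod (real_complex R t * z) = `|t| * cmod z.
Proof.
case: z => a b; rewrite /cmod /=.
have -> : (t * a - 0 * b) ^+ 2 + (t * b + 0 * a) ^+ 2 = t ^+ 2 * (a ^+ 2 + b ^+ 2) by ring.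
by rewrite sqrtrM ?sqr_ge0 // sqrtr_sqr.
Qed.

End Inst.

Theorem lemma3p1 (R : realType) :
  (forall (n m : nat) (A : 'M[R]_(n, m)) (p q : \bar R) (v : 'cV[R]_m),
     (1 <= p)%E -> (1 <= q)%E ->
     is_maximizer (fun x : R => `|x|) p q A v ->
     nonzero_equal_abs (fun x : R => `|x|) v ->
     nonzero_equal_abs (fun x : R => `|x|) (A *m v) ->
     ((1 < p < +oo)%E \/ (p = 1%E /\ inK1 (fun x : R => `|x|) v)
        \/ (p = +oo%E /\ inKm1 v)) ->
     eigenvector (adjmx id A *m A) v)
  /\
  (forall (n m : nat) (A : 'M[R[i]]_(n, m)) (p q : \bar R) (v : 'cV[R[i]]_m),
     (1 <= p)%E -> (1 <= q)%E ->
     is_maximizer (@cmod R) p q A v ->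
     nonzero_equal_abs (@cmod R) v ->
     nonzero_equal_abs (@cmod R) (A *m v) ->
     ((1 < p < +oo)%E \/ (p = 1%E /\ inK1 (@cmod R) v)
        \/ (p = +oo%E /\ inKm1 v)) ->
     eigenvector (adjmx (@conjc R) A *m A) v).
Proof.
split.
- move=> n m A p q v.
  apply: (@main_gen R R (fun x : R => `|x|) idfun (fun x => x) idfun) => //.
  + by move=> z /normr0_eq0.
  + by move=> z; rewrite real_normK ?num_real // expr2.
  + by move=> a b; rewrite -normrM ler_norm.
  + by move=> a b; rewrite mulrC.
  + by move=> t z; rewrite normrM.
- move=> n m A p q v.
  apply: (@main_gen R R[i] (@cmod R) (@conjc R) (@complex.Re R) (real_complex R)) => //.
  + exact: conjcK.
  + exact: conjc_real.
  + by case=> a b; case=> c d.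
  + by move=> t; case=> a b /=; ring.
  + by move=> z; rewrite /cmod; case: z => a b; apply: sqrtr_ge0.
  + by move=> z; apply: Normc.eq0_normc.
  + exact: cplx_nrm2.
  + exact: cplx_re_cs.
  + by case=> a1 a2; case=> b1 b2 /=; ring.
  + exact: cplx_nrm_emb.
Qed.
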